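(* Let $\kappa$ be a regular cardinal and $A$ a $\kappa$-additive complete atomic modal algebra. Then $\tau_A:A\to G(F(A))$, $\tau_A(x)=\{a\in\mathrm{At}(A)\mid a\leq x\}$, is an isomorphism of complete modal algebras; in particular, for every $x\in A$, $$\{a\in\mathrm{At}(A)\mid a\leq\Diamond x\}=\bigcap_{X\subseteq A,\ |X|<\kappa}R(X)^{-1}\big[\{a\in\mathrm{At}(A)\mid a\leq x\}\big].$$
   Context: A modal algebra is a Boolean algebra $A$ with a unary operation $\Diamond$ satisfying $\Diamond 0=0$ and $\Diamond(x\vee y)=\Diamond x\vee\Diamond y$; complete/atomic refer to the Boolean reduct (atomic: every non-zero element is the join of atoms below it); $\mathrm{At}(A)$ is the set of atoms; $\kappa$-additive means $\Diamond\bigvee X=\bigvee_{x\in X}\Diamond x$ for $|X|<\kappa$. A homomorphism of complete modal algebras is a Boolean homomorphism preserving all joins and meets and commuting with $\Diamond$. For $X\subseteq A$, $R(X)$ is the relation on $\mathrm{At}(A)$ with $a\,R(X)\,c\iff a\leq\bigwedge\{\Diamond x\mid x\in X,\ c\leq x\}$ (empty meet $=1$); $F(A)=\langle\mathrm{At}(A),\{R(X)\mid X\subseteq A,|X|<\kappa\}\rangle$. For a relation $R$ and a set $Y$, $R^{-1}[Y]=\{w\mid wRy\text{ for some }y\in Y\}$. For a multi-relational Kripke frame $M=\langle W,S\rangle$, $G(M)$ is the powerset Boolean algebra $\mathcal P(W)$ with $\Diamond_MY=\bigcap_{R\in S}R^{-1}[Y]$. *)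

(* Defs.v *)
From Stdlib Require Import Classical.

(** * Cardinals, represented by types *)

Definition injective {A B : Type} (f : A -> B) : Prop :=
  forall x y, f x = f y -> x = y.

Definition type_le (I K : Type) : Prop := exists f : I -> K, injective f.
Definition type_lt (I K : Type) : Prop := type_le I K /\ ~ type_le K I.

Definition card_lt {U : Type} (X : U -> Prop) (K : Type) : Prop :=
  type_lt {x : U | X x} K.

Definition regular (K : Type) : Prop :=
  type_le nat K /\
  forall (I : Type) (J : I -> Type),
    type_lt I K -> (forall i, type_lt (J i) K) -> type_lt {i : I & J i} K.

Record CBA := {
  car :> Type;
  le : car -> car -> Prop;
  bot : car; top : car;
  join : car -> car -> car; meet : car -> car -> car;
  compl : car -> car;
  sup : (car -> Prop) -> car; inf : (car -> Prop) -> car;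
  le_refl : forall x, le x x;
  le_trans : forall x y z, le x y -> le y z -> le x z;
  le_antisym : forall x y, le x y -> le y x -> x = y;
  bot_le : forall x, le bot x;
  le_top : forall x, le x top;
  join_ub_l : forall x y, le x (join x y);
  join_ub_r : forall x y, le y (join x y);
  join_lub : forall x y z, le x z -> le y z -> le (join x y) z;
  meet_lb_l : forall x y, le (meet x y) x;
  meet_lb_r : forall x y, le (meet x y) y;
  meet_glb : forall x y z, le z x -> le z y -> le z (meet x y);
  meet_join_distr : forall x y z, meet x (join y z) = join (meet x y) (meet x z);
  join_compl : forall x, join x (compl x) = top;
  meet_compl : forall x, meet x (compl x) = bot;
  sup_ub : forall P x, P x -> le x (sup P);
  sup_lub : forall P z, (forall x, P x -> le x z) -> le (sup P) z;
  inf_lb : forall P x, P x -> le (inf P) x;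
  inf_glb : forall P z, (forall x, P x -> le z x) -> le z (inf P)
}.

Arguments le {_} _ _.
Arguments bot {_}. Arguments top {_}.
Arguments join {_} _ _. Arguments meet {_} _ _. Arguments compl {_} _.
Arguments sup {_} _. Arguments inf {_} _.

Record CMA := {
  alg :> CBA;
  dia : alg -> alg;
  dia_bot : dia bot = bot;
  dia_join : forall x y, dia (join x y) = join (dia x) (dia y)
}.

Arguments dia {_} _.

Definition is_atom {A : CBA} (a : A) : Prop :=
  a <> bot /\ forall b, le b a -> b = bot \/ b = a.

Definition atomic (A : CBA) : Prop :=
  forall x : A, x <> bot -> x = sup (fun a => is_atom a /\ le a x).

Definition kappa_additive (K : Type) (A : CMA) : Prop :=
  forall X : A -> Prop, card_lt X K ->
    dia (sup X) = sup (fun d => exists x, X x /\ d = dia x).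

Definition At (A : CBA) : Type := {a : A | is_atom a}.

Definition Rel {A : CMA} (X : A -> Prop) (a c : At A) : Prop :=
  le (proj1_sig a) (inf (fun d => exists x, X x /\ le (proj1_sig c) x /\ d = dia x)).

Definition preimg {W : Type} (R : W -> W -> Prop) (Y : W -> Prop) : W -> Prop :=
  fun w => exists y, Y y /\ R w y.

Definition diaGF (K : Type) (A : CMA) (Y : At A -> Prop) : At A -> Prop :=
  fun w => forall X : A -> Prop, card_lt X K -> preimg (Rel X) Y w.

Definition tau (A : CMA) (x : A) : At A -> Prop :=
  fun a => le (proj1_sig a) x.

(** * Isomorphisms of complete modal algebras into a powerset modal algebra
    (sets are subsets W -> Prop, equal when extensionally equal) *)

Definition set_eq {W : Type} (Y Z : W -> Prop) : Prop := forall w, Y w <-> Z w.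

Definition is_CMA_iso_pow (A : CMA) (W : Type) (dM : (W -> Prop) -> (W -> Prop))
    (f : A -> (W -> Prop)) : Prop :=
  (forall x y, set_eq (f x) (f y) -> x = y) /\
  (forall Y : W -> Prop, exists x, set_eq (f x) Y) /\
  set_eq (f bot) (fun _ => False) /\
  set_eq (f top) (fun _ => True) /\
  (forall x y, set_eq (f (join x y)) (fun w => f x w \/ f y w)) /\
  (forall x y, set_eq (f (meet x y)) (fun w => f x w /\ f y w)) /\
  (forall x, set_eq (f (compl x)) (fun w => ~ f x w)) /\
  (forall P : A -> Prop, set_eq (f (sup P)) (fun w => exists x, P x /\ f x w)) /\
  (forall P : A -> Prop, set_eq (f (inf P)) (fun w => forall x, P x -> f x w)) /\
  (forall x, set_eq (f (dia x)) (dM (f x))).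

(* Main.v *)
Require Import Defs.
From Stdlib Require Import Classical.

Section BA.
Variable A : CBA.
Implicit Types x y z a b : A.

Lemma meetC x y : meet x y = meet y x.
Proof. apply le_antisym; apply meet_glb; try apply meet_lb_l; apply meet_lb_r. Qed.

Lemma meet_top x : meet x top = x.
Proof. apply le_antisym. apply meet_lb_l. apply meet_glb. apply le_refl. apply le_top. Qed.

Lemma join_bot x : join bot x = x.
Proof. apply le_antisym. apply join_lub. apply bot_le. apply le_refl. apply join_ub_r. Qed.

Lemma disj_le_compl a b : meet b a = bot -> le b (compl a).
Proof.
  intro H. rewrite <- (meet_top b). rewrite <- (join_compl A a).
  rewrite meet_join_distr, H, join_bot. apply meet_lb_r.
Qed.

Lemma le_bot x : le x bot -> x = bot.
Proof. intro H; apply le_antisym; auto. apply bot_le. Qed.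

Lemma atom_meet a y : is_atom a -> le a y \/ meet a y = bot.
Proof.
  intros [Hn Ha]. destruct (Ha (meet a y) (meet_lb_l _ _ _)) as [H|H]; auto.
  left. rewrite <- H. apply meet_lb_r.
Qed.

Lemma atom_not_both a x : is_atom a -> le a x -> le a (compl x) -> False.
Proof.
  intros [Hn _] H1 H2. apply Hn. apply le_bot. rewrite <- (meet_compl A x).
  apply meet_glb; auto.
Qed.

Lemma atom_sup a (P : A -> Prop) : is_atom a -> le a (sup P) -> exists x, P x /\ le a x.
Proof.
  intros Ha H. apply NNPP; intro Hn.
  assert (le (sup P) (compl a)).
  { apply sup_lub. intros x Px. apply disj_le_compl. rewrite meetC.
    destruct (atom_meet a x Ha) as [h|h]; auto. exfalso; apply Hn; eauto. }
  apply (atom_not_both a a Ha (le_refl _ _)). eapply le_trans; eauto.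
Qed.

Lemma atom_join a x y : is_atom a -> le a (join x y) -> le a x \/ le a y.
Proof.
  intros Ha H. apply NNPP; intro Hn.
  assert (le (join x y) (compl a)).
  { apply join_lub; apply disj_le_compl; rewrite meetC;
    [destruct (atom_meet a x Ha) | destruct (atom_meet a y Ha)]; tauto. }
  apply (atom_not_both a a Ha (le_refl _ _)). eapply le_trans; eauto.
Qed.

Lemma le_from_atoms x y : atomic A ->
  (forall a, is_atom a -> le a x -> le a y) -> le x y.
Proof.
  intros HA H. destruct (classic (x = bot)) as [E|E].
  - subst; apply bot_le.
  - rewrite (HA x E). apply sup_lub. intros a [Ha Hx]. auto.
Qed.
End BA.

Lemma dia_mono (A : CMA) (x y : A) : le x y -> le (dia x) (dia y).
Proof.
  intro H. assert (E : join x y = y).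
  { apply le_antisym. apply join_lub; auto. apply le_refl. apply join_ub_r. }
  rewrite <- E, dia_join. apply join_ub_l.
Qed.

Lemma card_sub {U} (X Z : U -> Prop) K : (forall u, Z u -> X u) -> card_lt X K -> card_lt Z K.
Proof.
  intros HZ [[f Hf] Hn].
  set (g := fun (z : {u | Z u}) => exist X (proj1_sig z) (HZ _ (proj2_sig z))).
  assert (Hg : injective g).
  { intros [a pa] [b pb] E. unfold g in E; simpl in E. injection E; intro; subst.
    rewrite (proof_irrelevance _ pa pb); reflexivity. }
  split.
  - exists (fun z => f (g z)). intros a b E. apply Hg, Hf, E.
  - intros [h Hh]. apply Hn. exists (fun k => g (h k)). intros a b E. apply Hh, Hg, E.
Qed.

Lemma sig_single {U} (x : U) (p q : {y | y = x}) : p = q.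
Proof. destruct p as [a pa], q as [b pb]. destruct pa. destruct pb. reflexivity. Qed.

Lemma card_single {U} (x : U) K : regular K -> card_lt (fun y => y = x) K.
Proof.
  intros [[f Hf] _]. split.
  - exists (fun _ => f 0). intros p q _. apply sig_single.
  - intros [h Hh]. assert (E : f 0 = f 1).
    { apply Hh. apply sig_single. }
    apply Hf in E. discriminate.
Qed.

Lemma key (K : Type) (A : CMA) :
  regular K -> kappa_additive K A -> atomic A ->
  (forall x : A,
     set_eq (tau A (dia x))
            (fun a => forall X : A -> Prop, card_lt X K ->
                        preimg (Rel X) (tau A x) a)).
Proof.
  intros HK Hadd HA x [a Ha]. unfold tau, preimg, Rel; simpl. split.
  - intros H X HX. apply NNPP; intro Hn.
    set (Z := fun y => X y /\ ~ le a (dia y)).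
    assert (HZ : card_lt Z K) by (apply (card_sub X); [intros u [h _]; exact h| exact HX]).
    assert (Hx : le x (sup Z)).
    { apply le_from_atoms; auto. intros c Hc Hcx. apply NNPP; intro Hn2.
      apply Hn. exists (exist _ c Hc). simpl. split; auto.
      apply inf_glb. intros d [y [Xy [cy ->]]].
      apply NNPP; intro Hd. apply Hn2. eapply le_trans; [exact cy|]. apply sup_ub with (P := Z). split; auto. }
    pose proof (le_trans _ _ _ _ H (dia_mono A _ _ Hx)) as H2.
    rewrite (Hadd Z HZ) in H2.
    destruct (atom_sup _ _ _ Ha H2) as [d [[y [[_ Hy] ->]] Hd]]. tauto.
  - intros H. destruct (H (fun y => y = x) (card_single x K HK)) as [[c Hc] [Hcx Hr]].
    simpl in *. eapply le_trans. exact Hr. apply inf_lb. exists x; auto.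
Qed.

Theorem theorem9p2 (K : Type) (A : CMA) :
  regular K -> kappa_additive K A -> atomic A ->
  is_CMA_iso_pow A (At A) (diaGF K A) (tau A) /\
  (forall x : A,
     set_eq (tau A (dia x))
            (fun a => forall X : A -> Prop, card_lt X K ->
                        preimg (Rel X) (tau A x) a)).
Proof.
  intros HK Hadd HA. pose proof (key K A HK Hadd HA) as Hkey.
  split; [|exact Hkey].
  unfold is_CMA_iso_pow, set_eq, tau.
  split; [|split; [|split; [|split; [|split; [|split; [|split; [|split; [|split]]]]]]]].
  - intros x y E. apply le_antisym; apply le_from_atoms; auto; intros a Ha h;
      apply (E (exist _ a Ha)); exact h.
  - intros Y. exists (sup (fun b => exists w, Y w /\ b = proj1_sig w)).
    intros [w Hw]; simpl; split.
    + intro h. destruct (atom_sup _ _ _ Hw h) as [b [[[w' Hw'] [Yw ->]] hb]].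
      simpl in hb. destruct (proj2 Hw' w hb) as [E|E]; [destruct Hw; contradiction|].
      subst. rewrite (proof_irrelevance _ Hw Hw'). exact Yw.
    + intro h. apply sup_ub. exists (exist _ w Hw); auto.
  - intros [a Ha]; simpl; split; [|tauto]. intro h. apply (proj1 Ha). apply le_bot; auto.
  - intros [a Ha]; simpl; split; auto. intros _; apply le_top.
  - intros x y [a Ha]; simpl; split.
    + apply atom_join; auto.
    + intros [h|h]; eapply le_trans; eauto; [apply join_ub_l|apply join_ub_r].
  - intros x y [a Ha]; simpl; split.
    + intro h; split; eapply le_trans; eauto; [apply meet_lb_l|apply meet_lb_r].
    + intros [h1 h2]; apply meet_glb; auto.
  - intros x [a Ha]; simpl; split.
    + intros h1 h2. eapply atom_not_both; eauto.
    + intro h. apply disj_le_compl. destruct (atom_meet _ a x Ha); tauto.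
  - intros P [a Ha]; simpl; split.
    + intro h. destruct (atom_sup _ _ _ Ha h) as [x [Px hx]]; eauto.
    + intros [x [Px hx]]. eapply le_trans; eauto. apply sup_ub; auto.
  - intros P [a Ha]; simpl; split.
    + intros h x Px. eapply le_trans; eauto. apply inf_lb; auto.
    + intro h. apply inf_glb; auto.
  - intros x. apply Hkey.
Qed.
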